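(* Let $(Y,\mathfrak C,\gamma)$ be a standard non-atomic probability space, let $\mathbf B=(B_n)_{n=1}^\infty$ be a sequence of sets in $\mathfrak C$ with $\gamma(B_n)>0$, and let $\gamma^{\mathbf B}$ be the restricted infinite power of $\gamma$ with respect to $\mathbf B$ on $(X,\mathfrak B)=(Y,\mathfrak C)^{\otimes\mathbb N}$. Let $T$ be a $\gamma$-preserving Borel bijection of $Y$ and $\mathbf T=\bigotimes_{n=1}^\infty T$ the coordinatewise map on $X$. If $\sum_{n=1}^\infty \frac{\gamma(B_n\triangle TB_n)}{\gamma(B_n)}<\infty$, then $\mathbf T$ preserves $\gamma^{\mathbf B}$.
   Context: For $n\in\mathbb N$ put $\mathbf B^n=Y^n\times B_{n+1}\times B_{n+2}\times\cdots$, so $\mathbf B^1\subset\mathbf B^2\subset\cdots$. The restricted infinite power $\gamma^{\mathbf B}$ is the unique $\sigma$-finite measure on $(X,\mathfrak B)$, supported on $\bigcup_n\mathbf B^n$, whose restriction to each $\mathbf B^n$ equals $\frac{\gamma}{\gamma(B_1)}\otimes\cdots\otimes\frac{\gamma}{\gamma(B_n)}\otimes\frac{\gamma\restriction B_{n+1}}{\gamma(B_{n+1})}\otimes\frac{\gamma\restriction B_{n+2}}{\gamma(B_{n+2})}\otimes\cdots$ (these restrictions are compatible). *)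

(* Defs.v *)
From HB Require Import structures.
From mathcomp Require Import all_boot all_order all_algebra.
From mathcomp Require Import all_classical all_reals all_analysis.
Set Implicit Arguments. Unset Strict Implicit. Unset Printing Implicit Defensive.
Import Order.TTheory GRing.Theory Num.Theory.
Local Open Scope classical_set_scope.
Local Open Scope ring_scope.

Definition cyl_gen d (Y : measurableType d) : set (set (nat -> Y)) :=
  [set A | exists (k : nat) (C : set Y), measurable C /\ A = (fun x => x k) @^-1` C].

Definition prodN d (Y : measurableType d) := g_sigma_algebraType (@cyl_gen d Y).

Definition standard_borel d (Y : measurableType d) (R : realType) : Prop :=
  exists f : Y -> measurableTypeR R,
    injective f /\ measurable_fun setT f /\ measurable (range f) /\
    (forall A : set Y, measurable A -> measurable (f @` A)).

Definition nonatomic d (Y : measurableType d) (R : realType)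
    (g : {measure set Y -> \bar R}) : Prop :=
  forall A : set Y, measurable A -> (0 < g A)%E ->
    exists C : set Y, [/\ measurable C, C `<=` A, (0 < g C)%E & (g C < g A)%E].

(* B^n = Y^n x B_{n+1} x B_{n+2} x ... (0-indexed: coordinates k >= n lie in B k) *)
Definition Bpow d (Y : measurableType d) (B : nat -> set Y) (n : nat) : set (@prodN d Y) :=
  [set x | forall k, (n <= k)%N -> B k (x k)].

Definition rect d (Y : measurableType d) (A : nat -> set Y) (m : nat) : set (@prodN d Y) :=
  [set x | forall k, (k < m)%N -> A k (x k)].

(* mu is the restricted infinite power gamma^B: sigma-finite, supported on
   \bigcup_n B^n, and its restriction to each B^n is the product measure
   (gamma/gamma(B_1)) x ... x (gamma/gamma(B_n)) x (gamma|B_{n+1}/gamma(B_{n+1})) x ...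
   (determined by its values on the rectangles with m >= n). *)
Definition restricted_infinite_power d (Y : measurableType d) (R : realType)
    (g : probability Y R) (B : nat -> set Y)
    (mu : {measure set (@prodN d Y) -> \bar R}) : Prop :=
  [/\ sigma_finite setT mu,
      mu (~` \bigcup_n Bpow B n) = 0%E &
      forall (n m : nat) (A : nat -> set Y), (n <= m)%N ->
        (forall k, measurable (A k)) ->
        mu (Bpow B n `&` rect A m) =
        (\prod_(k < m)
           (if (k < n)%N then fine (g (A k)) / fine (g (B k))
            else fine (g (A k `&` B k)) / fine (g (B k))))%:E].

Definition prodmap d (Y : measurableType d) (T : Y -> Y) : @prodN d Y -> @prodN d Y :=
  fun x => (fun k => T (x k)) : @prodN d Y.

(* Main.v *)
Require Import Defs.
From HB Require Import structures.
From mathcomp Require Import all_boot all_order all_algebra.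
From mathcomp Require Import all_classical all_reals all_analysis.
Import Order.TTheory GRing.Theory Num.Theory.
Local Open Scope classical_set_scope.
Local Open Scope ring_scope.

Lemma mcyl d (Y : measurableType d) k (C : set Y) : measurable C ->
  measurable ((fun x : prodN Y => x k) @^-1` C).
Proof. by move=> mC; apply: sub_sigma_algebra; exists k, C. Qed.

Lemma mrect d (Y : measurableType d) (A : nat -> set Y) m :
  (forall k, measurable (A k)) -> measurable (rect A m).
Proof.
move=> mA; elim: m => [|m IH].
  by rewrite (_ : rect A 0 = setT); [exact: measurableT | apply/seteqP; split => x //=].
rewrite (_ : rect A m.+1 = rect A m `&` ((fun x : prodN Y => x m) @^-1` A m)).
  by apply: measurableI => //; exact: mcyl.
apply/seteqP; split => x /=.
  by move=> h; split => [k km|]; apply: h => //; apply: ltnW.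
move=> [h1 h2] k; rewrite ltnS leq_eqVlt => /orP[/eqP->//|]; exact: h1.
Qed.

Lemma mBpow d (Y : measurableType d) (B : nat -> set Y) n :
  (forall k, measurable (B k)) -> measurable (Bpow B n).
Proof.
move=> mB.
rewrite (_ : Bpow B n = \bigcap_k ((fun x : prodN Y => x k) @^-1` (if (n <= k)%N then B k else setT))).
  by apply: bigcapT_measurable => k; apply: mcyl; case: ifP.
apply/seteqP; split => x /=.
  by move=> h k _; case: ifP => // /h.
by move=> h k nk; move: (h k I); rewrite nk.
Qed.

Lemma mprodmap d (Y : measurableType d) (T : Y -> Y) : measurable_fun setT T ->
  measurable_fun setT (prodmap T).
Proof.
move=> mT; apply: (@measurability _ _ _ (prodN Y) setT _ (@cyl_gen d Y)) => //.
move=> _ [_ [k [C [mC ->]]] <-].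
rewrite setTI.
have -> : prodmap T @^-1` ((fun x : prodN Y => x k) @^-1` C) = (fun x : prodN Y => x k) @^-1` (T @^-1` C) by [].
apply: mcyl; rewrite -(setTI (T @^-1` C)); exact: mT.
Qed.

Definition H3prop {d} {Y : measurableType d} {R : realType}
    (g : probability Y R) (B : nat -> set Y)
    (mu : {measure set (@prodN d Y) -> \bar R}) : Prop :=
      forall (n m : nat) (A : nat -> set Y), (n <= m)%N ->
        (forall k, measurable (A k)) ->
        mu (Bpow B n `&` rect A m) =
        (\prod_(k < m)
           (if (k < n)%N then fine (g (A k)) / fine (g (B k))
            else fine (g (A k `&` B k)) / fine (g (B k))))%:E.

Lemma lim_eq {d} {Y : measurableType d} {R : realType}
    (g : probability Y R) (B : nat -> set Y)
    (mu : {measure set (@prodN d Y) -> \bar R}) (H3 : H3prop g B mu)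
    (HBm : forall n, measurable (B n))
    (D D' : nat -> set Y) N :
  (forall k, measurable (D k)) -> (forall k, measurable (D' k)) ->
  (forall k, if (k < N)%N then g (D k) = g (D' k) else g (D k `&` B k) = g (D' k `&` B k)) ->
  mu (Bpow B N `&` [set x : prodN Y | forall k, D k (x k)]) =
  mu (Bpow B N `&` [set x : prodN Y | forall k, D' k (x k)]).
Proof.
move=> mD mD' hDD.
have key (E : nat -> set Y) : (forall k, measurable (E k)) ->
    mu \o (fun M => Bpow B N `&` rect E (M + N)) @ \oo -->
    mu (Bpow B N `&` [set x : prodN Y | forall k, E k (x k)]).
  move=> mE.
  have -> : Bpow B N `&` [set x : prodN Y | forall k, E k (x k)] =
     \bigcap_M (Bpow B N `&` rect E (M + N)).
    apply/seteqP; split => x /=.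
      by move=> [h1 h2] M _; split => // k _; apply: h2.
    move=> h; split; first by case: (h 0%N I).
    by move=> k; case: (h k.+1 I) => _; apply; rewrite addSn ltnS leq_addr.
  apply: nonincreasing_cvg_mu.
  - by rewrite H3 ?leq_addl //; exact: ltry.
  - by move=> M; apply: measurableI; [exact: mBpow| exact: mrect].
  - by apply: bigcapT_measurable => M; apply: measurableI; [exact: mBpow| exact: mrect].
  - move=> M M' MM'; apply/subsetPset => x /= [h1 h2]; split => // k kM; apply: h2.
    by apply: (leq_trans kM); rewrite leq_add2r.
have e : (fun M => mu (Bpow B N `&` rect D (M + N))) = (fun M => mu (Bpow B N `&` rect D' (M + N))).
  apply/funext => M; rewrite !H3 ?leq_addl //; congr (_%:E).
  apply: eq_bigr => k _; move: (hDD k); case: ifP => _ ->; done.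
have := key _ mD; rewrite /comp e => h1.
have := key _ mD' => h2.
by rewrite -(cvg_lim _ h1) // -(cvg_lim _ h2).
Qed.

Definition rects {d} {Y : measurableType d} : set (set (prodN Y)) :=
  [set S | exists A m, (forall k, measurable (A k)) /\ S = rect A m].

Lemma cyl_rect {d} {Y : measurableType d} k (C : set Y) :
  (fun x : prodN Y => x k) @^-1` C = rect (fun j => if j == k then C else setT) k.+1.
Proof.
apply/seteqP; split => x /=.
  by move=> h j _; case: eqP => // ->.
by move=> h; move: (h k (ltnSn k)); rewrite eqxx.
Qed.

Lemma rects_gen {d} {Y : measurableType d} :
  (@measurable _ (prodN Y)) = <<s (@rects d Y) >>.
Proof.
apply/seteqP; split.
  apply: smallest_sub; first exact: smallest_sigma_algebra.
  move=> _ [k [C [mC ->]]]; apply: sub_sigma_algebra.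
  rewrite cyl_rect; eexists; eexists; split; last reflexivity.
  by move=> j /=; case: (j == k).
apply: smallest_sub; first exact: sigma_algebra_measurable.
by move=> _ [A [m [mA ->]]]; exact: mrect.
Qed.

Lemma rects_setI {d} {Y : measurableType d} : setI_closed (@rects d Y).
Proof.
move=> _ _ [A [m [mA ->]]] [A' [m' [mA' ->]]].
exists (fun k => (if (k < m)%N then A k else setT) `&` (if (k < m')%N then A' k else setT)), (maxn m m').
split.
  by move=> k; apply: measurableI; case: ifP.
apply/seteqP; split => x /=.
  move=> [h1 h2] k _; split; case: ifP => // km; [exact: h1|exact: h2].
move=> h; split => k km.
  have := h k; rewrite km; case=> //; exact: (leq_trans km (leq_maxl _ _)).
have := h k; rewrite km; case=> //; exact: (leq_trans km (leq_maxr _ _)).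
Qed.

Lemma uniq_rect {d} {Y : measurableType d} {R : realType}
  (m1 m2 : {measure set (prodN Y) -> \bar R}) :
  (m1 setT < +oo)%E ->
  (forall A m, (forall k, measurable (A k)) -> m1 (rect A m) = m2 (rect A m)) ->
  forall S, measurable S -> m1 S = m2 S.
Proof.
move=> fin h S mS.
apply: (measure_unique rects (fun _ => setT)) => //.
- exact: rects_gen.
- exact: rects_setI.
- move=> _; exists (fun _ => setT), 0%N; split => //.
  by apply/seteqP; split => x //=.
- by rewrite bigcup_const.
- by move=> _ [A [m [mA ->]]]; exact: h.
Qed.

Lemma Bpow_fin {d} {Y : measurableType d} {R : realType}
    (g : probability Y R) (B : nat -> set Y)
    (mu : {measure set (@prodN d Y) -> \bar R}) (H3 : H3prop g B mu) N :
  (mu (Bpow B N) < +oo)%E.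
Proof.
have -> : Bpow B N = Bpow B N `&` rect (fun _ => setT) N.
  by apply/seteqP; split => x //= [].
by rewrite H3 //; exact: ltry.
Qed.

Lemma restr_eq {d} {Y : measurableType d} {R : realType}
    (g : probability Y R) (B : nat -> set Y)
    (mu : {measure set (@prodN d Y) -> \bar R}) (H3 : H3prop g B mu)
    (HBm : forall n, measurable (B n))
    (T : Y -> Y) (HTbij : bijective T) (HTm : measurable_fun setT T)
    (HTinvm : forall A : set Y, measurable A -> measurable (T @` A))
    (HTpres : forall A : set Y, measurable A -> g (T @^-1` A) = g A) N S :
  measurable S ->
  mu (prodmap T @^-1` S `&` (Bpow B N `&` Bpow (fun k => T @^-1` B k) N)) =
  mu (S `&` (Bpow B N `&` Bpow (fun k => T @` B k) N)).
Proof.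
have mTp (A : set Y) : measurable A -> measurable (T @^-1` A).
  by move=> mA; rewrite -(setTI (T @^-1` A)); exact: HTm.
have Tinj : injective T by exact: bij_inj.
have TTB (A : set Y) : T @^-1` (T @` A) = A.
  apply/seteqP; split => x /=; last by move=> Ax; exists x.
  by move=> [y Ay /Tinj <-].
have mW1 : measurable (Bpow B N `&` Bpow (fun k => T @^-1` B k) N).
  by apply: measurableI; apply: mBpow => // k; exact: mTp.
have mW2 : measurable (Bpow B N `&` Bpow (fun k => T @` B k) N).
  by apply: measurableI; apply: mBpow => // k; exact: HTinvm.
have mP := mprodmap _ _ _ HTm.
move=> mS.
have := @uniq_rect d Y R (pushforward (mrestr mu mW1) (prodmap T)) (mrestr mu mW2).
apply => //.
  rewrite /pushforward /mrestr /=.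
  change (mu (prodmap T @^-1` setT `&` (Bpow B N `&` Bpow (fun k => T @^-1` B k) N)) < +oo)%E.
  apply: (@le_lt_trans _ _ (mu (Bpow B N))); last exact: Bpow_fin H3 N.
  apply: le_measure.
  - by rewrite inE preimage_setT setTI.
  - by rewrite inE; exact: mBpow.
  - by move=> x [_ []].
move=> A m mA.
change (mu (prodmap T @^-1` rect A m `&` (Bpow B N `&` Bpow (fun k => T @^-1` B k) N)) =
  mu (rect A m `&` (Bpow B N `&` Bpow (fun k => T @` B k) N))).
pose D k := (if (k < m)%N then T @^-1` A k else setT) `&` (if (N <= k)%N then T @^-1` B k else setT).
pose D' k := (if (k < m)%N then A k else setT) `&` (if (N <= k)%N then T @` B k else setT).
have -> : prodmap T @^-1` rect A m `&` (Bpow B N `&` Bpow (fun k => T @^-1` B k) N) =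
    Bpow B N `&` [set x : prodN Y | forall k, D k (x k)].
  apply/seteqP; split => x /=.
    move=> [h1 [h2 h3]]; split => // k; rewrite /D; split; case: ifP => // hk.
    - exact: h1.
    - exact: h3.
  move=> [h1 h2]; split; last split => //.
    by move=> k km; have := h2 k; rewrite /D km => -[].
  by move=> k km; have := h2 k; rewrite /D km => -[].
have -> : rect A m `&` (Bpow B N `&` Bpow (fun k => T @` B k) N) =
    Bpow B N `&` [set x : prodN Y | forall k, D' k (x k)].
  apply/seteqP; split => x /=.
    move=> [h1 [h2 h3]]; split => // k; rewrite /D'; split; case: ifP => // hk.
    - exact: h1.
    - exact: h3.
  move=> [h1 h2]; split; last split => //.
    by move=> k km; have := h2 k; rewrite /D' km => -[].
  by move=> k km; have := h2 k; rewrite /D' km => -[].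
apply: (@lim_eq d Y R g B mu H3 HBm) => //.
- by move=> k; rewrite /D; apply: measurableI; case: ifP => // _; exact: mTp.
- by move=> k; rewrite /D'; apply: measurableI; case: ifP => // _; exact: HTinvm.
move=> k; case: ifPn => kN.
  have -> : D k = T @^-1` (D' k).
    rewrite /D /D' /= (leqNgt N k) kN /=; apply/seteqP; split => x /=; case: ifP => //.
  rewrite HTpres //; rewrite /D' /=; apply: measurableI; case: ifP => _ //; first [exact: mA | exact: HTinvm].
have -> : D k `&` B k = T @^-1` (D' k `&` B k).
  rewrite /D /D' /= (leqNgt N k) (negbTE kN) /=; apply/seteqP; split => x /=.
    move=> [[a b] c]; split; last exact: b.
    by split; [move: a; case: ifP | exists x].
  move=> [[a [y By e]] b]; split; last by rewrite -(Tinj _ _ e).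
  by split; [move: a; case: ifP | exact: b].
rewrite HTpres //; rewrite /D' /=; apply: measurableI => //; apply: measurableI;
  case: ifP => _ //; first [exact: mA | exact: HTinvm].
Qed.

Lemma prod_stable {R : realType} (h : nat -> R) K k : (K <= k)%N ->
  (forall j, (K <= j)%N -> h j = 1) ->
  \prod_(j < k) h j = \prod_(j < K) h j.
Proof.
move=> Kk h1; rewrite -(subnKC Kk); elim: (k - K)%N => [|i IH]; first by rewrite addn0.
by rewrite addnS big_ord_recr /= IH h1 ?mulr1 // leq_addr.
Qed.

Lemma null_lem {d} {Y : measurableType d} {R : realType}
    (g : probability Y R) (B : nat -> set Y)
    (mu : {measure set (@prodN d Y) -> \bar R}) (H3 : H3prop g B mu)
    (HBm : forall n, measurable (B n)) (HBpos : forall n, (0 < g (B n))%E)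
    (C : nat -> set Y) (mC : forall k, measurable (C k))
    (a : nat -> R) (a0 : forall k, 0 <= a k)
    (Hsum : (\sum_(0 <= n <oo) (a n)%:E < +oo)%E)
    (Ha : forall k, fine (g (B k `\` C k)) / fine (g (B k)) <= a k) K :
  mu (Bpow B K `&` ~` \bigcup_N (Bpow B N `&` Bpow C N)) = 0%E.
Proof.
have gBfin k : fine (g (B k)) != 0.
  have : g (B k) \is a fin_num by rewrite fin_num_measure.
  by move: (HBpos k); case: (g (B k)) => // r; rewrite lte_fin /= => /gt_eqF ->.
pose h j := if (j < K)%N then fine (g setT) / fine (g (B j))
            else fine (g (setT `&` B j)) / fine (g (B j)).
pose c := \prod_(j < K) h j.
have c0 : 0 <= c.
  apply: prodr_ge0 => j _; rewrite /h; case: ifP => _;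
  by apply: divr_ge0; apply: fine_ge0; apply: measure_ge0.
pose F k := Bpow B K `&` rect (fun j => if j == k then ~` C k else setT) k.+1.
have mF k : measurable (F k).
  apply: measurableI; first exact: mBpow.
  apply: mrect => j; case: (j == k) => //; exact: measurableC.
have muF k : (K <= k)%N -> (mu (F k) <= (c * a k)%:E)%E.
  move=> Kk; rewrite /F H3; last by move=> j; case: (j == k) => //; exact: measurableC.
    2: exact: (leq_trans Kk).
  rewrite lee_fin big_ord_recr /= eqxx ltnNge Kk /=.
  rewrite (_ : \prod_(i < k) _ = \prod_(i < k) h i); last first.
    apply: eq_bigr => j _; rewrite /h (ltn_eqF (ltn_ord j)) //.
  rewrite (@prod_stable _ h K k Kk); last first.
    by move=> j Kj; rewrite /h ltnNge Kj /= setTI divff.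
  apply: ler_wpM2l => //; apply: (le_trans _ (Ha k)).
  by rewrite setDE setIC.
pose F' k := if (K <= k)%N then F k else set0.
have mF' k : measurable (F' k) by rewrite /F'; case: ifP.
have muF' k : (mu (F' k) <= (c * a k)%:E)%E.
  rewrite /F'; case: ifP => Kk; first exact: muF.
  by rewrite measure0 lee_fin mulr_ge0.
set Z := Bpow B K `&` _.
have mZ : measurable Z.
  apply: measurableI; first exact: mBpow.
  apply: measurableC; apply: bigcupT_measurable => N.
  by apply: measurableI; exact: mBpow.
have sub M : (K <= M)%N -> Z `<=` \bigcup_(n in ~` `I_M) F' n.
  move=> KM x [xK xW].
  have : ~ Bpow C M x.
    move=> hC; apply: xW; exists M => //; split => //.
    by move=> k Mk; apply: xK; exact: leq_trans KM Mk.
  move=> /existsNP [k /not_implyP [Mk nC]].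
  exists k; first by rewrite /= ltnNge Mk.
  rewrite /F' (leq_trans KM Mk); split => // j _; case: eqP => [->|] //.
have le M : (K <= M)%N -> (mu Z <= c%:E * \sum_(M <= k <oo) (a k)%:E)%E.
  move=> KM; rewrite -nneseriesZl; last by move=> i _; rewrite lee_fin.
  apply: le_trans (measure_sigma_subadditive_tail _ _ _ (sub M KM)) _ => //.
  apply: lee_nneseries => // i _ _; exact: measure_ge0.
have ht := @nneseries_tail_cvg R (fun n => (a n)%:E) xpredT Hsum (fun k _ => a0 k).
have hc := cvgeZl (y:=c%:E) isT ht.
apply/eqP; rewrite -measure_le0.
rewrite -(mule0 c%:E); apply: (cvge_to_ge hc).
by exists K => // M /= KM; exact: le.
Qed.

Lemma full_null {d} {Y : measurableType d} {R : realType} (B C : nat -> set Y)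
    (mu : {measure set (@prodN d Y) -> \bar R})
    (HBm : forall n, measurable (B n)) (mC : forall k, measurable (C k))
    (H2 : mu (~` \bigcup_n Bpow B n) = 0%E)
    (HZ : forall K, mu (Bpow B K `&` ~` \bigcup_N (Bpow B N `&` Bpow C N)) = 0%E) :
  mu (~` \bigcup_N (Bpow B N `&` Bpow C N)) = 0%E.
Proof.
set U := \bigcup_N _.
have mU : measurable U.
  by apply: bigcupT_measurable => N; apply: measurableI; exact: mBpow.
have mB' : measurable (~` \bigcup_n Bpow B n).
  by apply: measurableC; apply: bigcupT_measurable => N; exact: mBpow.
have mZ K : measurable (Bpow B K `&` ~` U) by apply: measurableI; [exact: mBpow|exact: measurableC].
apply/eqP; rewrite -measure_le0.
apply: (@le_trans _ _ (mu ((~` \bigcup_n Bpow B n) `|` \bigcup_K (Bpow B K `&` ~` U)))).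
  apply: le_measure.
  - by rewrite inE; exact: measurableC.
  - by rewrite inE; apply: measurableU => //; exact: bigcupT_measurable.
  move=> x nU; case: (pselect ((\bigcup_n Bpow B n) x)) => [[K _ xK]|nB]; last by left.
  by right; exists K.
apply: (@le_trans _ _ (mu (~` \bigcup_n Bpow B n) + mu (\bigcup_K (Bpow B K `&` ~` U)))%E).
  by apply: measureU2 => //; exact: bigcupT_measurable.
rewrite H2 add0e.
apply: le_trans (@measure_sigma_subadditive _ _ _ mu _ (fun K => Bpow B K `&` ~` U) mZ _ _) _ => //.
- exact: bigcupT_measurable.
- by rewrite eseries0 // => i _ _; exact: HZ.
Qed.

Lemma lim_W {d} {Y : measurableType d} {R : realType} (B C : nat -> set Y)
    (mu : {measure set (@prodN d Y) -> \bar R})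
    (HBm : forall n, measurable (B n)) (mC : forall k, measurable (C k))
    (H0 : mu (~` \bigcup_N (Bpow B N `&` Bpow C N)) = 0%E) E :
  measurable E ->
  (fun N => mu (E `&` (Bpow B N `&` Bpow C N))) @ \oo --> mu E.
Proof.
move=> mE.
pose U := \bigcup_N (Bpow B N `&` Bpow C N).
have mW N : measurable (Bpow B N `&` Bpow C N) by apply: measurableI; exact: mBpow.
have mU : measurable U by exact: bigcupT_measurable.
have -> : mu E = mu (\bigcup_N (E `&` (Bpow B N `&` Bpow C N))).
  rewrite -setI_bigcupr; apply/eqP; rewrite eq_le; apply/andP; split; last first.
    apply: le_measure; [by rewrite inE; apply: measurableI | by rewrite inE | by move=> x []].
  apply: (@le_trans _ _ (mu (E `&` U) + mu (~` U))%E); last by rewrite H0 adde0.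
  apply: (@le_trans _ _ (mu ((E `&` U) `|` ~` U))%E).
    apply: le_measure; rewrite ?inE.
    - exact: mE.
    - by apply: measurableU; [exact: measurableI | exact: measurableC].
    - by move=> x Ex; case: (pselect (U x)) => Ux; [left | right].
  by apply: measureU2; [exact: measurableI | exact: measurableC].
apply: (@nondecreasing_cvg_mu _ _ _ mu (fun N => E `&` (Bpow B N `&` Bpow C N))).
- by move=> N; exact: measurableI.
- by apply: bigcupT_measurable => N; exact: measurableI.
- move=> N N' NN'; apply/subsetPset => x [xE [h1 h2]]; split => //; split => k kN.
  + by apply: h1; exact: leq_trans NN' kN.
  + by apply: h2; exact: leq_trans NN' kN.
Qed.

Theorem proposition1p6 (d : measure_display) (Y : measurableType d) (R : realType)
  (g : probability Y R)
  (Hstd : standard_borel Y R) (Hna : nonatomic g)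
  (B : nat -> set Y) (HBm : forall n, measurable (B n)) (HBpos : forall n, (0 < g (B n))%E)
  (mu : {measure set (@prodN d Y) -> \bar R})
  (Hmu : restricted_infinite_power g B mu)
  (T : Y -> Y) (HTbij : bijective T) (HTm : measurable_fun setT T)
  (HTinvm : forall A : set Y, measurable A -> measurable (T @` A))
  (HTpres : forall A : set Y, measurable A -> g (T @^-1` A) = g A)
  (Hsum : (\sum_(0 <= n <oo)
             (fine (g ((B n `\` T @` B n) `|` (T @` B n `\` B n))) / fine (g (B n)))%:E
           < +oo)%E) :
  forall A : set (@prodN d Y), measurable A -> mu (prodmap T @^-1` A) = mu A.
Proof.
case: Hmu => _ H2 H3.
have mTp (A : set Y) : measurable A -> measurable (T @^-1` A).
  by move=> mA; rewrite -(setTI (T @^-1` A)); exact: HTm.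
have Tinj : injective T by exact: bij_inj.
have TTB (A : set Y) : T @^-1` (T @` A) = A.
  apply/seteqP; split => x /=; last by move=> Ax; exists x.
  by move=> [y Ay /Tinj <-].
pose sd n := (B n `\` T @` B n) `|` (T @` B n `\` B n).
have msd n : measurable (sd n).
  by apply: measurableU; apply: measurableD => //; exact: HTinvm.
pose a n := fine (g (sd n)) / fine (g (B n)).
have a0 n : 0 <= a n.
  by apply: divr_ge0; apply: fine_ge0; apply: measure_ge0.
have Ha (C : set Y) n : measurable C -> (g (B n `\` C) <= g (sd n))%E ->
    fine (g (B n `\` C)) / fine (g (B n)) <= a n.
  move=> mC le; apply: ler_wpM2r.
    by rewrite invr_ge0; apply: fine_ge0; apply: measure_ge0.
  apply: fine_le => //; rewrite fin_num_measure //.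
  - exact: measurableD.
have N1 : mu (~` \bigcup_N (Bpow B N `&` Bpow (fun k => T @^-1` B k) N)) = 0%E.
  apply: (@full_null d Y R B (fun k => T @^-1` B k) mu HBm _ H2) => [k|K]; first exact: mTp.
  apply: (@null_lem d Y R g B mu H3 HBm HBpos _ _ a a0 Hsum) => [k|k]; first exact: mTp.
  apply: Ha; first exact: mTp.
  have -> : B k `\` T @^-1` B k = T @^-1` (T @` B k `\` B k).
    apply/seteqP; split => x /=.
      by move=> [Bx nB]; split => //; exists x.
    by move=> [[y By e] nB]; split => //; rewrite -(Tinj _ _ e).
  rewrite HTpres; last by apply: measurableD => //; exact: HTinvm.
  apply: le_measure; rewrite ?inE.
  - by apply: measurableD => //; exact: HTinvm.
  - exact: msd.
  - by move=> x hx; right.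
have N2 : mu (~` \bigcup_N (Bpow B N `&` Bpow (fun k => T @` B k) N)) = 0%E.
  apply: (@full_null d Y R B (fun k => T @` B k) mu HBm _ H2) => [k|K]; first exact: HTinvm.
  apply: (@null_lem d Y R g B mu H3 HBm HBpos _ _ a a0 Hsum) => [k|k]; first exact: HTinvm.
  apply: Ha; first exact: HTinvm.
  apply: le_measure; rewrite ?inE.
  - by apply: measurableD => //; exact: HTinvm.
  - exact: msd.
  - by move=> x hx; left.
move=> S mS.
have mP := mprodmap _ _ _ HTm.
have mPS : measurable (prodmap T @^-1` S) by rewrite -(setTI (prodmap T @^-1` S)); exact: mP.
have h1 := @lim_W d Y R B (fun k => T @^-1` B k) mu HBm (fun k => mTp _ (HBm k)) N1 _ mPS.
have h2 := @lim_W d Y R B (fun k => T @` B k) mu HBm (fun k => HTinvm _ (HBm k)) N2 _ mS.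
have ee : (fun N => mu (prodmap T @^-1` S `&` (Bpow B N `&` Bpow (fun k => T @^-1` B k) N))) =
          (fun N => mu (S `&` (Bpow B N `&` Bpow (fun k => T @` B k) N))).
  apply/funext => N; exact: (@restr_eq d Y R g B mu H3 HBm T HTbij HTm HTinvm HTpres N S mS).
rewrite ee in h1.
by rewrite -(cvg_lim _ h1) // -(cvg_lim _ h2).
Qed.
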